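(* Let $\mathbf{a}\in\mathbb{C}^{2N}$ be an eigenvector of $\mathbf{D}$ with eigenvalue $\mu\in\mathbb{C}$. Then $\bm{\Gamma}\mathbf{a}^{*}$ is an eigenvector of $\mathbf{D}$ with eigenvalue $-\mu^{*}$. Furthermore, if $\mathbf{a},\mathbf{b}$ are eigenvectors of $\mathbf{D}$ and $\mathbf{a}'=\bm{\Gamma}\mathbf{a}^{*}$, $\mathbf{b}'=\bm{\Gamma}\mathbf{b}^{*}$, then $$\langle \mathbf{a},\mathbf{b}\rangle^{*}=-\langle \mathbf{a}',\mathbf{b}'\rangle,\qquad \langle \mathbf{a},\mathbf{b}'\rangle=-\langle \mathbf{b},\mathbf{a}'\rangle .$$
   Context: Fix an integer $N\ge 1$, real numbers $v$ with $|v|<1$, $L>0$, $L_{\star}\ge 0$, an integer $M\ge 1$ and real coefficients $c_{1}=1,c_{2},\dots,c_{M}$. Let $F(k)=\sum_{i=1}^{M}(-1)^{i-1}c_{i}L_{\star}^{2i-2}k^{2i-1}$ and $k_{n}=n\pi/L$, and assume $F(k_{n})^{2}\neq v^{2}k_{n}^{2}$ for $n=1,\dots,N$. Put $u_{n}=\sqrt{|F(k_{n})^{2}-v^{2}k_{n}^{2}|}/k_{n}>0$, and $\varepsilon_{n}=1$ if $F(k_{n})^{2}-v^{2}k_{n}^{2}>0$, $\varepsilon_{n}=0$ otherwise. Define $N\times N$ matrices $\bm\sigma,\bm\rho,\bm\xi$ by $\sigma_{nn}=0$, $\sigma_{nm}=\dfrac{2iv\sqrt{nm}\,[1-(-1)^{n+m}]}{\pi\sqrt{u_{n}u_{m}}\,(m^{2}-n^{2})}$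 for $n\neq m$, $\bm\rho=\mathrm{diag}(n u_{n}\varepsilon_{n})$, $\bm\xi=\mathrm{diag}(-n u_{n}(1-\varepsilon_{n}))$. With $\mathbf{I}$ the $N\times N$ identity, define the $2N\times 2N$ matrices $\bm{\Sigma}=\begin{pmatrix}\mathbf{I}&\mathbf{0}\\ \mathbf{0}&-\mathbf{I}\end{pmatrix}$, $\bm{\Gamma}=\begin{pmatrix}\mathbf{0}&\mathbf{I}\\ \mathbf{I}&\mathbf{0}\end{pmatrix}$, $\mathbf{R}=\bm{\Sigma}-\begin{pmatrix}\bm\sigma&\bm\sigma\\ \bm\sigma&\bm\sigma\end{pmatrix}$, $\bm{\Omega}=\begin{pmatrix}\bm\rho&\bm\xi\\ \bm\xi&\bm\rho\end{pmatrix}$. Standing assumption: $\mathbf{R}$ is invertible. Let $\mathbf{D}=\mathbf{R}^{-1}\bm{\Omega}$. Here ${}^{*}$ denotes entrywise complex conjugation, ${}^{\mathrm{H}}$ the conjugate transpose, and the $\mathbf{R}$-inner product is $\langle\mathbf{x},\mathbf{y}\rangle=\mathbf{x}^{\mathrm{H}}\mathbf{R}\mathbf{y}$. *)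

(* Defs.v *)
From mathcomp Require Import all_boot all_order all_algebra.
From mathcomp Require Export complex.
From mathcomp Require Import reals trigo.
Set Implicit Arguments. Unset Strict Implicit. Unset Printing Implicit Defensive.
Import GRing.Theory Num.Theory.
Local Open Scope ring_scope.
Local Open Scope complex_scope.

Section Defs.
Variable R : realType.
Variables (N : nat) (v L Lstar : R) (M : nat) (c : nat -> R).

Definition Fk (k : R) : R :=
  \sum_(1 <= i < M.+1) (-1) ^+ (i - 1) * c i * Lstar ^+ (2 * i - 2) * k ^+ (2 * i - 1).

Definition kn (n : nat) : R := n%:R * pi / L.

Definition disc (n : nat) : R := Fk (kn n) ^+ 2 - v ^+ 2 * kn n ^+ 2.

Definition un (n : nat) : R := Num.sqrt `|disc n| / kn n.

Definition epsn (n : nat) : bool := 0 < disc n.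

(* N x N matrices; index i : 'I_N stands for n = i+1 *)
Definition sigma_mx : 'M[R[i]]_N :=
  \matrix_(i < N, j < N)
    (let n := i.+1 in let m := j.+1 in
     if i == j then 0
     else 'i * ((2 * v * Num.sqrt (n * m)%:R * (1 - (-1) ^+ (n + m)))
                / (pi * Num.sqrt (un n * un m) * (m%:R ^+ 2 - n%:R ^+ 2)))%:C).

Definition rho_mx : 'M[R[i]]_N :=
  \matrix_(i < N, j < N)
    (if i == j then (i.+1%:R * un i.+1 * (epsn i.+1)%:R)%:C else 0).

Definition xi_mx : 'M[R[i]]_N :=
  \matrix_(i < N, j < N)
    (if i == j then (- (i.+1%:R * un i.+1 * (1 - (epsn i.+1)%:R)))%:C else 0).

Definition Sigma_mx : 'M[R[i]]_(N + N) := block_mx 1%:M 0 0 (- 1%:M).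
Definition Gamma_mx : 'M[R[i]]_(N + N) := block_mx 0 1%:M 1%:M 0.
Definition R_mx : 'M[R[i]]_(N + N) :=
  Sigma_mx - block_mx sigma_mx sigma_mx sigma_mx sigma_mx.
Definition Omega_mx : 'M[R[i]]_(N + N) := block_mx rho_mx xi_mx xi_mx rho_mx.
Definition D_mx : 'M[R[i]]_(N + N) := invmx R_mx *m Omega_mx.

Definition conjv (x : 'cV[R[i]]_(N + N)) : 'cV[R[i]]_(N + N) := map_mx conjc x.

Definition Rinner (x y : 'cV[R[i]]_(N + N)) : R[i] :=
  ((conjv x)^T *m R_mx *m y) 0 0.

Definition is_eigvec (a : 'cV[R[i]]_(N + N)) (mu : R[i]) : Prop :=
  a != 0 /\ D_mx *m a = mu *: a.

End Defs.

(* Main.v *)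
Require Import Defs.
From mathcomp Require Import all_boot all_order all_algebra.
From mathcomp Require Import complex.
From mathcomp Require Import reals trigo.
Import GRing.Theory Num.Theory.
Local Open Scope ring_scope.
Local Open Scope complex_scope.

Lemma conjc_i (R : realType) : ('i : R[i])^* = - 'i.
Proof. by apply/eqP; rewrite eq_complex /= oppr0 !eqxx. Qed.

Lemma conjc_ir (R : realType) (r : R) : ('i * r%:C)^* = - ('i * r%:C).
Proof. by apply/eqP; rewrite eq_complex /= !mul0r !mul1r !subr0 !add0r !oppr0 !eqxx. Qed.

Section H.
Variable R : realType.
Variables (N : nat) (v L Lstar : R) (M : nat) (c : nat -> R).
Local Notation S := (@sigma_mx R N v L Lstar M c).
Local Notation G := (@Gamma_mx R N).
Local Notation RR := (@R_mx R N v L Lstar M c).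
Local Notation Om := (@Omega_mx R N v L Lstar M c).

Lemma sigma_tr : S^T = - S.
Proof.
apply/matrixP => i j; rewrite !mxE eq_sym.
case: eqP => [->|/eqP ne]; first by rewrite oppr0.
rewrite -mulrN -rmorphN /=; congr (_ * _%:C).
rewrite mulnC addnC [un _ _ _ _ _ j.+1 * _]mulrC.
by rewrite -(opprB (i.+1%:R ^+ 2)) [in RHS]mulrN invrN mulrN opprK.
Qed.

Lemma sigma_conj : map_mx conjc S = - S.
Proof.
apply/matrixP => i j; rewrite !mxE.
case: eqP => _; first by rewrite conjc0 oppr0.
by rewrite conjc_ir.
Qed.

Lemma R_block : RR = block_mx (1%:M - S) (- S) (- S) (- 1%:M - S).
Proof. by rewrite /R_mx /Sigma_mx opp_block_mx add_block_mx !add0r. Qed.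

Lemma Rc_block : map_mx conjc RR = block_mx (1%:M + S) S S (- 1%:M + S).
Proof.
rewrite R_block map_block_mx !map_mxB !map_mxN map_mx1 sigma_conj.
by rewrite !opprK.
Qed.

Lemma R_tr : RR^T = map_mx conjc RR.
Proof.
rewrite Rc_block R_block tr_block_mx !linearB /= !linearN /= trmx1 sigma_tr.
by rewrite !opprK.
Qed.

Lemma GRc : G *m map_mx conjc RR = - (RR *m G).
Proof.
rewrite Rc_block R_block /Gamma_mx !mulmx_block opp_block_mx.
rewrite !mul0mx !mulmx0 !mul1mx !mulmx1 !add0r !addr0.
by rewrite !opprB !opprK addrC [1%:M + _]addrC.
Qed.

Lemma GG : G *m G = 1%:M.
Proof.
rewrite /Gamma_mx mulmx_block !mul0mx !mul1mx !add0r !addr0.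
by rewrite [RHS]scalar_mx_block.
Qed.

Lemma G_tr : G^T = G.
Proof. by rewrite /Gamma_mx tr_block_mx !trmx0 trmx1. Qed.

Lemma G_conj : map_mx conjc G = G.
Proof. by rewrite /Gamma_mx map_block_mx map_mx1 !raddf0. Qed.

Lemma Om_conj : map_mx conjc Om = Om.
Proof.
rewrite /Omega_mx map_block_mx.
congr block_mx; apply/matrixP => i j; rewrite !mxE; case: eqP => _;
  by rewrite ?conjc0 ?conjc_real.
Qed.

Lemma GOm : G *m Om = Om *m G.
Proof.
rewrite /Gamma_mx /Omega_mx !mulmx_block.
by rewrite !mul0mx !mulmx0 !mul1mx !mulmx1 !add0r !addr0.
Qed.
End H.

Lemma conjvK (R : realType) (N : nat) (x : 'cV[R[i]]_(N + N)) :
  map_mx conjc (map_mx conjc x) = x.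
Proof. by apply/matrixP => i j; rewrite !mxE conjcK. Qed.

Lemma opp00 (R : realType) (A : 'M[R[i]]_1) : (- A) 0 0 = - (A 0 0).
Proof. by rewrite mxE. Qed.

Lemma conj00 (R : realType) (A : 'M[R[i]]_1) : (A 0 0)^* = (map_mx conjc A) 0 0.
Proof. by rewrite mxE. Qed.

Lemma tr00 (R : realType) (A : 'M[R[i]]_1) : A^T 0 0 = A 0 0.
Proof. by rewrite mxE. Qed.

Theorem lemma2 (R : realType) (N : nat) (v L Lstar : R) (M : nat) (c : nat -> R) :
  (1 <= N)%N -> `|v| < 1 -> 0 < L -> 0 <= Lstar -> (1 <= M)%N -> c 1%N = 1 ->
  (forall n : nat, (1 <= n <= N)%N ->
     @Fk R Lstar M c (@kn R L n) ^+ 2 != v ^+ 2 * @kn R L n ^+ 2) ->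
  @R_mx R N v L Lstar M c \in unitmx ->
  (forall (a : 'cV[R[i]]_(N + N)) (mu : R[i]),
     @is_eigvec R N v L Lstar M c a mu ->
     @is_eigvec R N v L Lstar M c (@Gamma_mx R N *m conjv a) (- mu^*)) /\
  (forall (a b : 'cV[R[i]]_(N + N)) (mu nu : R[i]),
     @is_eigvec R N v L Lstar M c a mu -> @is_eigvec R N v L Lstar M c b nu ->
     let a' := @Gamma_mx R N *m conjv a in
     let b' := @Gamma_mx R N *m conjv b in
     (@Rinner R N v L Lstar M c a b)^* = - @Rinner R N v L Lstar M c a' b' /\
     @Rinner R N v L Lstar M c a b' = - @Rinner R N v L Lstar M c b a').
Proof.
move=> _ _ _ _ _ _ _ Ru.
have RRG : @R_mx R N v L Lstar M c *m Gamma_mx R N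
    = - (Gamma_mx R N *m map_mx conjc (@R_mx R N v L Lstar M c)).
  by rewrite GRc opprK.
have conjG : forall x : 'cV[R[i]]_(N + N),
    conjv (Gamma_mx R N *m conjv x) = Gamma_mx R N *m x.
  by move=> x; rewrite /conjv map_mxM G_conj conjvK.
split.
  move=> a mu [a0 Da].
  have OmA : @Omega_mx R N v L Lstar M c *m a = mu *: (@R_mx R N v L Lstar M c *m a).
    have <- : @R_mx R N v L Lstar M c *m (@D_mx R N v L Lstar M c *m a)
        = @Omega_mx R N v L Lstar M c *m a.
      by rewrite /D_mx -mulmxA mulKVmx.
    by rewrite Da scalemxAr.
  have OmAc : @Omega_mx R N v L Lstar M c *m conjv a
      = mu^* *: (map_mx conjc (@R_mx R N v L Lstar M c) *m conjv a).
    by rewrite /conjv -(@Om_conj R N v L Lstar M c) -map_mxM OmA map_mxZ map_mxM.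
  split.
    apply/eqP => h; move/eqP: a0; apply.
    have : Gamma_mx R N *m (Gamma_mx R N *m conjv a) = 0 by rewrite h mulmx0.
    rewrite mulmxA GG mul1mx => /eqP.
    by rewrite /conjv map_mx_eq0 => /eqP.
  rewrite /D_mx -!mulmxA [@Omega_mx _ _ _ _ _ _ _ *m (_ *m _)]mulmxA -GOm -mulmxA OmAc.
  rewrite -scalemxAr mulmxA GRc mulNmx -mulmxA scalerN -scaleNr scalemxAr mulKmx //.
move=> a b mu nu _ _ a' b'; rewrite /a' /b' /Rinner !conjG.
split.
  rewrite conj00 !map_mxM -map_trmx conjvK.
  rewrite trmx_mul G_tr -!mulmxA [@R_mx _ _ _ _ _ _ _ *m (_ *m _)]mulmxA RRG.
  rewrite mulNmx mulmxN [Gamma_mx R N *m (_ *m _ *m _)]mulmxA [Gamma_mx R N *m (Gamma_mx R N *m _)]mulmxA GG mul1mx mulmxN opp00 opprK.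
  by [].
rewrite -[X in _ = - X]tr00 !trmx_mul trmxK G_tr R_tr !mulmxA.
rewrite -[_^T *m Gamma_mx R N *m _]mulmxA GRc mulmxN mulNmx opp00 opprK.
by rewrite !mulmxA.
Qed.
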